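(* Let $\tau=\infty$ and let $(V,\mathcal{E})$ be the lookdown representation based on $(X_n)$, $(k_n)$. Suppose (i) $\#\{i:k_n(i)=0\}\le1$ for each $n$, and (ii) fixation occurs almost surely. Then $\rho(v)=1$ for every $v\in V$.
   Context: Data: $\tau=\infty$, positive integers $(X_n)_{n\ge0}$, vectors $k_n=(k_n(i))_{i=1}^{X_n}$ of nonnegative integers with $\sum_ik_n(i)=X_{n+1}$. $V_n=\{(n,i):1\le i\le X_n\}$, $V=\bigcup_nV_n$. Lookdown representation: for each $n$ fix a partition $\xi_n$ of $\{1,\dots,X_{n+1}\}$ whose block sizes are the nonzero entries of $k_n$; let $(\sigma_n)$ be independent uniform random permutations of $\{1,\dots,X_{n+1}\}$; let $\Xi_n=\{\sigma_n(A):A\in\xi_n\}$ with blocks listed in increasing order of least element as $B_1,\dots,B_{\ell_n}$; $\mathcal{E}_n=\bigcup_i\{((n,i),(n+1,j)):j\in B_i\}$, $\mathcal{E}=\bigcup_n\mathcal{E}_n$. For $v\in V_n$, $m\ge n$, $D_m(v)$ is the set of vertices of $V_m$ reachable from $v$ by a directed path in $\mathcal{E}$. Fixation means: for each $n$ there is $m>n$ such that $D_m(v)=\emptyset$ for all but one $v\in V_n$ (equivalently, when $\tau=\infty$, the graph has a unique infinite directed path from generation $0$). Identification probability: $\mathcal{P}$ = permutations of $V$ preserving each $V_n$; $\sigma\in\mathcal{P}$ uniform means its restrictions to the $V_n$ are independent uniform permutations; $\sigma(E)=\{(\sigma(v),\sigma(w)):(v,w)\in E\}$. With $\sigma$ uniform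 independent of $\mathcal{E}$, for $v\in V_n$, $\rho(v)=\mathbb{E}[\max_{w\in V_n}\mathbb{P}(\sigma(v)=w\mid\sigma(\mathcal{E}))]$. *)

(* Defs.v *)
From HB Require Import structures.
From mathcomp Require Import all_boot all_order all_algebra all_fingroup.
From mathcomp Require Import all_classical all_reals all_analysis.
Set Implicit Arguments. Unset Strict Implicit. Unset Printing Implicit Defensive.
Import Order.TTheory GRing.Theory Num.Theory.

(* Conventions: generation n has vertices (n,i), i : 'I_(X n)
   (0-indexed version of 1..X_n).  *)

Section Lookdown.
Variable X : nat -> nat.

Definition Xi (n : nat) (xi : {set {set 'I_(X n.+1)}}) (s : {perm 'I_(X n.+1)})
  : {set {set 'I_(X n.+1)}} := (fun A : {set 'I_(X n.+1)} => s @: A) @: xi.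

(* Rank (0-indexed) of the block of Xi_n containing j, when the blocks of Xi_n
   are listed in increasing order of their least element: the number of blocks
   whose least element is smaller than the least element of the block of j. *)
Definition block_rank (n : nat) (xi : {set {set 'I_(X n.+1)}})
  (s : {perm 'I_(X n.+1)}) (j : 'I_(X n.+1)) : nat :=
  #|[set B in Xi xi s |
      [exists x in B, [forall y in finset.pblock (Xi xi s) j, x < y]]]|.

(* edge set E_n : ((n,i),(n+1,j)) in E_n iff j lies in B_i (the i-th block) *)
Definition ld_edge (n : nat) (xi : {set {set 'I_(X n.+1)}})
  (s : {perm 'I_(X n.+1)}) (i : 'I_(X n)) (j : 'I_(X n.+1)) : bool :=
  val i == block_rank xi s j.

Fixpoint desc (E : forall m, 'I_(X m) -> 'I_(X m.+1) -> bool)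
  (n : nat) (i : 'I_(X n)) (d : nat) : {set 'I_(X (d + n))} :=
  match d return {set 'I_(X (d + n))} with
  | 0 => [set i]
  | d'.+1 => [set j : 'I_(X (d'.+1 + n)) |
              [exists u in desc E i d', E (d' + n) u j]]
  end.

Definition fixation (E : forall m, 'I_(X m) -> 'I_(X m.+1) -> bool) : Prop :=
  forall n, exists d, 0 < d /\
    exists v : 'I_(X n), forall u : 'I_(X n), u != v -> desc E u d = finset.set0.

Definition perm_edge (E : forall m, 'I_(X m) -> 'I_(X m.+1) -> bool)
  (tau : forall m, {perm 'I_(X m)}) (n : nat) (a : 'I_(X n)) (b : 'I_(X n.+1))
  : bool := E n ((tau n)^-1%g a) ((tau n.+1)^-1%g b).

End Lookdown.

Section CondProb.
Local Open Scope classical_set_scope.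
Local Open Scope ring_scope.
Definition cond_prob_version d (T : measurableType d) (R : realType)
  (P : probability T R) (G : set (set T)) (A : set T) (f : T -> R) : Prop :=
  (forall U : set R, measurable U -> G (f @^-1` U)) /\
  P.-integrable setT (EFin \o f) /\
  (forall B, G B -> (\int[P]_(x in B) (f x)%:E = P (A `&` B))%E).
End CondProb.

(* Main.v *)
Set Warnings "-notation-overridden,-ambiguous-paths,-notation-incompatible-prefix,-parsing,-coercions".
Require Import Defs.
From HB Require Import structures.
From mathcomp Require Import all_boot all_order all_algebra all_fingroup.
From mathcomp Require Import all_classical all_reals all_analysis.
From mathcomp Require Import measurable_realfun.
From mathcomp Require Import zify.
Import Order.TTheory GRing.Theory Num.Theory.

Module Helpers.
Set Implicit Arguments. Unset Strict Implicit.

Section Gen.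
Variables (X : nat -> nat) (n : nat) (xi : {set {set 'I_(X n.+1)}})
  (s : {perm 'I_(X n.+1)}).
Hypothesis xiP : finset.partition xi [set: 'I_(X n.+1)].
Local Notation Xs := (Xi xi s).

Lemma Xs_neq0 B : B \in Xs -> B != finset.set0.
Proof.
case/imsetP=> A Axi ->; rewrite imset_eq0.
by apply: contraTneq Axi => ->; case/and3P: xiP.
Qed.

Lemma Xs_cover j : exists2 B, B \in Xs & j \in B.
Proof.
case/and3P: xiP => /eqP cov _ _.
have : (s^-1)%g j \in finset.cover xi by rewrite cov inE.
case/bigcupP=> A Axi jA; exists (s @: A); first exact: imset_f.
by apply/imsetP; exists ((s^-1)%g j) => //; rewrite permKV.
Qed.

Lemma Xs_triv B B' j : B \in Xs -> B' \in Xs -> j \in B -> j \in B' -> B = B'.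
Proof.
case/and3P: xiP => _ triv _.
case/imsetP=> A Axi -> /imsetP[A' A'xi ->].
case/imsetP=> x xA jx /imsetP[x' x'A jx'].
have xx : x = x' by apply: (@perm_inj _ s); rewrite -jx -jx'.
subst x'; congr (_ @: _).
by rewrite -(def_pblock triv Axi xA) (def_pblock triv A'xi x'A).
Qed.

Lemma pblockXs B j : B \in Xs -> j \in B -> finset.pblock Xs j = B.
Proof.
move=> BX jB; rewrite /finset.pblock; case: pickP => [B' /andP[B'X jB']|/(_ B)].
  by move=> /=; exact: (Xs_triv B'X BX jB' jB).
by rewrite /= BX jB.
Qed.

Definition bef (B B' : {set 'I_(X n.+1)}) := [exists x in B', [forall y in B, x < y]].
Definition rk (B : {set 'I_(X n.+1)}) := #|[set B' in Xs | bef B B']|.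

Lemma block_rankE j : block_rank xi s j = rk (finset.pblock Xs j).
Proof. by []. Qed.

Lemma bef_irr B : B != finset.set0 -> ~~ bef B B.
Proof.
case/finset.set0Pn=> x0 x0B; apply/existsP => -[x /andP[xB /forallP /(_ x)]].
by rewrite xB ltnn.
Qed.

Lemma bef_trans B B' B'' : bef B B' -> bef B' B'' -> bef B B''.
Proof.
case/existsP=> x /andP[xB' /forallP Hx] /existsP[y /andP[yB'' /forallP Hy]].
apply/existsP; exists y; rewrite yB''; apply/forallP => z; apply/implyP => zB.
have := Hy x; rewrite xB' /= => yx.
have := Hx z; rewrite zB /= => xz.
exact: ltn_trans yx xz.
Qed.

Lemma bef_total B B' : B \in Xs -> B' \in Xs -> B != B' -> bef B B' || bef B' B.
Proof.
move=> BX B'X neq.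
case/finset.set0Pn: (Xs_neq0 BX) => x0 x0B.
case/finset.set0Pn: (Xs_neq0 B'X) => x1 x1B.
case: (arg_minnP (fun x : 'I_(X n.+1) => val x) x0B) => m mB Hm.
case: (arg_minnP (fun x : 'I_(X n.+1) => val x) x1B) => m' m'B Hm'.
have mm : m != m'.
  by apply: contra neq => /eqP mm; subst m'; rewrite (Xs_triv BX B'X mB m'B).
case: (ltngtP m m') => [lt|lt|/val_inj eq]; last by rewrite eq eqxx in mm.
- apply/orP; right; apply/existsP; exists m; apply/andP; split; first exact: mB; apply/forallP => y.
  by apply/implyP => yB'; apply: (leq_trans lt); apply: Hm'.
- apply/orP; left; apply/existsP; exists m'; apply/andP; split; first exact: m'B; apply/forallP => y.
  by apply/implyP => yB; apply: (leq_trans lt); apply: Hm.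
Qed.

Lemma bef_asym B B' : bef B B' -> ~~ bef B' B.
Proof.
move=> h; apply/negP => h'.
case/existsP: h => x /andP[xB' /forallP Hx].
case/existsP: h' => y /andP[yB /forallP Hy].
have := Hx y; rewrite yB /=; have := Hy x; rewrite xB' /=.
move=> a b; have := ltn_trans a b; by rewrite ltnn.
Qed.

Lemma rk_lt B B' : bef B B' -> B' \in Xs -> rk B' < rk B.
Proof.
move=> h B'X; apply: proper_card; apply/fintype.properP; split.
  apply/fintype.subsetP => C; rewrite !inE => /andP[-> h2] /=.
  exact: bef_trans h h2.
exists B'; first by rewrite inE B'X h.
by rewrite inE B'X /= bef_irr // Xs_neq0.
Qed.

Lemma rk_ltcard B : B \in Xs -> rk B < #|Xs|.
Proof.
move=> BX; apply: proper_card; apply/fintype.properP; split.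
  by apply/fintype.subsetP => C; rewrite inE => /andP[].
by exists B => //; rewrite inE BX /= bef_irr // Xs_neq0.
Qed.

Lemma rk_inj B B' : B \in Xs -> B' \in Xs -> rk B = rk B' -> B = B'.
Proof.
move=> BX B'X e; apply/eqP; apply/negPn/negP => neq.
case/orP: (bef_total BX B'X neq) => h.
- by have := rk_lt h B'X; rewrite e ltnn.
- by have := rk_lt h BX; rewrite e ltnn.
Qed.

Lemma rk_surj i : i < #|Xs| -> exists2 B, B \in Xs & rk B = i.
Proof.
move=> lti.
have U : uniq [seq rk B | B <- enum Xs].
  rewrite map_inj_in_uniq ?enum_uniq // => B B'; rewrite !mem_enum.
  exact: rk_inj.
have S : {subset [seq rk B | B <- enum Xs] <= iota 0 #|Xs|}.
  move=> x /mapP[B]; rewrite mem_enum => BX ->.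
  by rewrite mem_iota add0n rk_ltcard.
have sz : size (iota 0 #|Xs|) <= size [seq rk B | B <- enum Xs].
  by rewrite size_iota size_map cardE.
have [_ P] := uniq_min_size U S sz.
have : i \in iota 0 #|Xs| by rewrite mem_iota add0n.
rewrite -P => /mapP[B]; rewrite mem_enum => BX ->.
by exists B.
Qed.

Definition E0 := ld_edge xi s.

Lemma E0E (a : 'I_(X n)) j : E0 a j = (val a == rk (finset.pblock Xs j)).
Proof. by []. Qed.

Lemma child_iff (a : 'I_(X n)) B j : B \in Xs -> val a = rk B -> E0 a j = (j \in B).
Proof.
move=> BX ea; rewrite E0E ea.
case: (Xs_cover j) => B' B'X jB'; rewrite (pblockXs B'X jB').
apply/eqP/idP => [/(rk_inj BX B'X) -> //|jB].
by rewrite (Xs_triv BX B'X jB jB').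
Qed.

Lemma hasch_iff (a : 'I_(X n)) : [exists j, E0 a j] = (val a < #|Xs|).
Proof.
apply/existsP/idP => [[j]|lt].
  rewrite E0E => /eqP ->; case: (Xs_cover j) => B BX jB.
  by rewrite (pblockXs BX jB) rk_ltcard.
case: (rk_surj lt) => B BX eB.
case/finset.set0Pn: (Xs_neq0 BX) => j jB; exists j.
by rewrite (child_iff j BX (esym eB)).
Qed.

Lemma order_iff (a a' : 'I_(X n)) : val a < #|Xs| -> val a' < #|Xs| ->
  (val a < val a') = [exists c, E0 a c && [forall c', E0 a' c' ==> (c < c')]].
Proof.
move=> la la'.
case: (rk_surj la) => B BX eB; case: (rk_surj la') => B' B'X eB'.
have -> : [exists c, E0 a c && [forall c', E0 a' c' ==> (c < c')]] = bef B' B.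
  apply/existsP/existsP => -[c /andP[h1 /forallP h2]]; exists c.
    rewrite -(child_iff _ BX (esym eB)) h1 /=; apply/forallP => c'.
    by rewrite -(child_iff _ B'X (esym eB')); apply: h2.
  rewrite (child_iff _ BX (esym eB)) h1 /=; apply/forallP => c'.
  by rewrite (child_iff _ B'X (esym eB')); apply: h2.
rewrite -eB -eB'.
have [->|neq] := eqVneq B B'; first by rewrite ltnn (negbTE (bef_irr (Xs_neq0 B'X))).
case/orP: (bef_total BX B'X neq) => h.
  rewrite (negbTE (bef_asym h)); apply/negbTE; rewrite -leqNgt ltnW //.
  exact: rk_lt.
by rewrite h (rk_lt h BX).
Qed.

End Gen.


Lemma card_Xs (X : nat -> nat) n (xi : {set {set 'I_(X n.+1)}}) (s : {perm 'I_(X n.+1)})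
  (k : 'I_(X n) -> nat) :
  perm_eq [seq #|A| | A : {set 'I_(X n.+1)} <- enum xi]
          [seq m <- [seq k i | i <- enum 'I_(X n)] | m != 0%N] ->
  (#|[set i : 'I_(X n) | k i == 0%N]| <= 1)%N ->
  X n <= #|Xi xi s|.+1.
Proof.
move=> pe h.
have -> : #|Xi xi s| = #|xi| by rewrite card_imset //; apply: imset_inj; apply: perm_inj.
have -> : #|xi| = count (fun i => k i != 0%N) (enum 'I_(X n)).
  rewrite cardE -(size_map (fun A : {set 'I_(X n.+1)} => #|A|) (enum xi)) (perm_size pe).
  by rewrite size_filter count_map.
have e : #|[set i : 'I_(X n) | k i == 0%N]| = count (fun i => k i == 0%N) (enum 'I_(X n)).
  by rewrite cardsE cardE enumT -size_filter -deprecated_filter_index_enum.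
rewrite e in h.
have := count_predC (fun i => k i == 0%N) (enum 'I_(X n)).
rewrite size_enum_ord.
have -> : count (predC (fun i => k i == 0%N)) (enum 'I_(X n)) = count (fun i => k i != 0%N) (enum 'I_(X n)) by [].
lia.
Qed.


Lemma card_ltv N (v : 'I_N) : #|[set a : 'I_N | val a < val v]| = val v.
Proof.
have -> : #|[set a : 'I_N | val a < val v]| = count (fun a : 'I_N => val a < val v) (enum 'I_N).
  by rewrite cardsE cardE enumT -size_filter -deprecated_filter_index_enum.
rewrite -(count_map val (fun i => i < val v)) val_enum_ord.
by rewrite -size_filter (filter_iota_ltn 0 (ltnW (ltn_ord v))) size_iota.
Qed.

Section Alg.
Variable X : nat -> nat.
Definition Efam := forall m, 'I_(X m) -> 'I_(X m.+1) -> bool.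

Fixpoint alive (E : Efam) (d : nat) : forall n, 'I_(X n) -> bool :=
  match d with
  | 0 => fun _ _ => true
  | d'.+1 => fun n a => [exists c, E n a c && alive E d' c]
  end.

Fixpoint ltd (E : Efam) (d : nat) : forall n, 'I_(X n) -> 'I_(X n) -> bool :=
  match d with
  | 0 => fun _ _ _ => false
  | d'.+1 => fun n a a' => [exists c, E n a c] &&
      (~~ [exists c, E n a' c] ||
       [exists c, E n a c && [forall c', E n a' c' ==> ltd E d' c c']])
  end.

Definition rkd (E : Efam) d n (v : 'I_(X n)) :=
  #|[set a | (a != v) && ltd E d a v]|.

Definition fixd (E : Efam) d n :=
  [exists v : 'I_(X n), [forall u, (u != v) ==> ~~ alive E d u]].

Lemma exswap (A B : finType) (S : {set A}) (R : A -> B -> bool) (P : B -> bool) :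
  [exists j, [exists u in S, R u j] && P j] = [exists u in S, [exists j, R u j && P j]].
Proof.
apply/existsP/existsP => [[j /andP[/existsP[u /andP[uS Ruj]] Pj]]|[u /andP[uS /existsP[j /andP[Ruj Pj]]]]].
  by exists u; rewrite uS /=; apply/existsP; exists j; rewrite Ruj.
by exists j; rewrite Pj andbT; apply/existsP; exists u; rewrite uS.
Qed.

Lemma desc_exists (E : Efam) d : forall n (a : 'I_(X n)) (P : forall m, 'I_(X m) -> bool),
  [exists u in desc E a d.+1, P _ u] =
  [exists c, E n a c && [exists u in desc E c d, P _ u]].
Proof.
elim: d => [|d IH] n a P.
  apply/existsP/existsP => [[u /andP[]]|[c /andP[Eac /existsP[u /andP[]]]]].
    rewrite inE => /existsP[x /andP[]]; rewrite inE => /eqP -> Eau Pu.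
    by exists u; rewrite Eau /=; apply/existsP; exists u; rewrite inE eqxx.
  rewrite inE => /eqP -> Pc; exists c; rewrite Pc andbT inE.
  by apply/existsP; exists a; rewrite inE eqxx.
have -> : [exists u in desc E a d.+2, P _ u] =
    [exists u in desc E a d.+1, [exists j, E _ u j && P _ j]].
  rewrite -exswap; apply: eq_existsb => j; by rewrite inE.
rewrite (IH n a (fun m u => [exists j, E m u j && P m.+1 j])).
apply: eq_existsb => c; congr (_ && _).
rewrite -exswap; apply: eq_existsb => j; by rewrite inE.
Qed.

Lemma neq0E (A : finType) (S : {set A}) : (S != finset.set0) = [exists u in S, true].
Proof.
apply/finset.set0Pn/existsP => [[u uS]|[u /andP[uS _]]]; first by exists u; rewrite uS.
by exists u.
Qed.

Lemma desc_alive (E : Efam) d : forall n (a : 'I_(X n)),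
  (desc E a d != finset.set0) = alive E d a.
Proof.
elim: d => [|d IH] n a.
  by apply/finset.set0Pn; exists a; rewrite inE.
rewrite neq0E (desc_exists E d a (fun _ _ => true)) /=.
by apply: eq_existsb => c; rewrite -IH neq0E.
Qed.

Lemma ex_perm (A : finType) (p : {perm A}) (F : A -> bool) :
  [exists c, F ((p^-1)%g c)] = [exists c, F c].
Proof.
apply/existsP/existsP => [[c h]|[c h]]; first by exists ((p^-1)%g c).
by exists (p c); rewrite permK.
Qed.

Lemma all_perm (A : finType) (p : {perm A}) (F : A -> bool) :
  [forall c, F ((p^-1)%g c)] = [forall c, F c].
Proof.
apply/forallP/forallP => h c; last exact: h.
by have := h (p c); rewrite permK.
Qed.

Variables (E : Efam) (tau : forall m, {perm 'I_(X m)}).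
Local Notation E' := (perm_edge E tau).

Lemma alive_perm d : forall n (a : 'I_(X n)), alive E' d a = alive E d ((tau n)^-1%g a).
Proof.
elim: d => [//|d IH] n a /=.
rewrite -[RHS](ex_perm (tau n.+1)); apply: eq_existsb => c.
by rewrite IH.
Qed.

Lemma ltd_perm d : forall n (a a' : 'I_(X n)),
  ltd E' d a a' = ltd E d ((tau n)^-1%g a) ((tau n)^-1%g a').
Proof.
elim: d => [//|d IH] n a a' /=.
congr (_ && (_ || _)).
- by rewrite -[RHS](ex_perm (tau n.+1)).
- by congr (~~ _); rewrite -[RHS](ex_perm (tau n.+1)).
rewrite -[RHS](ex_perm (tau n.+1)); apply: eq_existsb => c; congr (_ && _).
rewrite -[RHS](all_perm (tau n.+1)); apply: eq_forallb => c'.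
by rewrite IH.
Qed.

Lemma rkd_perm d n (v : 'I_(X n)) : rkd E' d v = rkd E d ((tau n)^-1%g v).
Proof.
rewrite /rkd -(card_imset _ (@perm_inj _ ((tau n)^-1)%g)).
apply: eq_card => b; rewrite [RHS]inE.
apply/imsetP/andP => [[a]|[bv lt]].
  rewrite inE => /andP[av lt] ->.
  by rewrite (inj_eq (@perm_inj _ _)) av -ltd_perm.
exists (tau n b); last by rewrite permK.
rewrite inE ltd_perm permK lt andbT; apply: contra bv => /eqP <-; by rewrite permK.
Qed.

Lemma fixd_perm d n : fixd E' d n = fixd E d n.
Proof.
rewrite /fixd -[RHS](ex_perm (tau n)); apply: eq_existsb => v.
rewrite -[RHS](all_perm (tau n)); apply: eq_forallb => u.
by rewrite alive_perm (inj_eq (@perm_inj _ _)).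
Qed.

End Alg.

Section Dep.
Variable X : nat -> nat.
Variables (E1 E2 : Efam X) (M : nat).
Hypothesis agree : forall m, m < M -> forall a b, @E1 m a b = @E2 m a b.

Lemma alive_dep d : forall n (a : 'I_(X n)), d + n <= M -> alive E1 d a = alive E2 d a.
Proof.
elim: d => [//|d IH] n a le /=.
apply: eq_existsb => c; rewrite agree; last by lia.
by rewrite IH //; lia.
Qed.

Lemma ltd_dep d : forall n (a a' : 'I_(X n)), d + n <= M -> ltd E1 d a a' = ltd E2 d a a'.
Proof.
elim: d => [//|d IH] n a a' le /=.
have ag : forall a b, @E1 n a b = @E2 n a b by apply: agree; lia.
congr (_ && (_ || _)).
- by apply: eq_existsb => c; rewrite ag.
- by congr (~~ _); apply: eq_existsb => c; rewrite ag.
apply: eq_existsb => c; rewrite ag; congr (_ && _).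
apply: eq_forallb => c'; rewrite ag IH //; lia.
Qed.

Lemma rkd_dep d n (v : 'I_(X n)) : d + n <= M -> rkd E1 d v = rkd E2 d v.
Proof.
move=> le; rewrite /rkd; apply: eq_card => a; rewrite !inE.
by rewrite ltd_dep.
Qed.

Lemma fixd_dep d n : d + n <= M -> fixd E1 d n = fixd E2 d n.
Proof.
move=> le; rewrite /fixd; apply: eq_existsb => v; apply: eq_forallb => u.
by rewrite alive_dep.
Qed.
End Dep.

Section Correct.
Variables (X : nat -> nat) (xi : forall m, {set {set 'I_(X m.+1)}})
  (s : forall m, {perm 'I_(X m.+1)}).
Hypothesis xiP : forall m, finset.partition (xi m) [set: 'I_(X m.+1)].
Hypothesis cardH : forall m, X m <= #|Xi (xi m) (s m)|.+1.
Let E : Efam X := fun m => ld_edge (xi m) (s m).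

Lemma ltd_correct d : forall n (a a' : 'I_(X n)),
  ~~ alive E d a || ~~ alive E d a' -> ltd E d a a' = (val a < val a').
Proof.
elim: d => [//|d IH] n a a' H /=.
have ha := hasch_iff (s n) (xiP n) a.
have ha' := hasch_iff (s n) (xiP n) a'.
rewrite /E0 in ha ha'; rewrite /E ha ha'.
have cH := cardH n.
have la := ltn_ord a; have la' := ltn_ord a'.
change (\val a) with (nat_of_ord a) in *; change (\val a') with (nat_of_ord a') in *.
case: (ltnP (nat_of_ord a) #|Xi (xi n) (s n)|) => Ha /=; last first.
  case: (ltnP (nat_of_ord a') #|Xi (xi n) (s n)|) => Ha'.
    apply/esym/negbTE; rewrite -leqNgt; lia.
  apply/esym/negbTE; rewrite -leqNgt; lia.
case: (ltnP (nat_of_ord a') #|Xi (xi n) (s n)|) => Ha' /=; last by apply/esym; lia.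
rewrite (order_iff (xiP n) Ha Ha') /E0.
apply: eq_existsb => c; apply/andP/andP => -[Eac /forallP h]; split => //;
  apply/forallP => c'; apply/implyP => Eac'; have := h c'; rewrite Eac' /=.
- move=> lt; rewrite -(IH _ c c') //.
  case/orP: H => /negP H; apply/orP; [left|right]; apply/negP => Al; apply: H.
  + by apply/existsP; exists c; apply/andP; split; [exact: Eac | exact: Al].
  + by apply/existsP; exists c'; apply/andP; split; [exact: Eac' | exact: Al].
- move=> lt; rewrite (IH _ c c') //.
  case/orP: H => /negP H; apply/orP; [left|right]; apply/negP => Al; apply: H.
  + by apply/existsP; exists c; apply/andP; split; [exact: Eac | exact: Al].
  + by apply/existsP; exists c'; apply/andP; split; [exact: Eac' | exact: Al].
Qed.

Lemma rkd_correct d n (v : 'I_(X n)) : fixd E d n -> rkd E d v = val v.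
Proof.
case/existsP=> v0 /forallP h0.
rewrite /rkd -(card_ltv v); apply: eq_card => a; rewrite !inE.
have [->|av] := eqVneq a v; first by rewrite ltnn.
rewrite /= ltd_correct //.
have [av0|av0] := eqVneq a v0.
  subst a; apply/orP; right; have := h0 v; rewrite eq_sym av /=; exact.
by apply/orP; left; have := h0 a; rewrite av0.
Qed.

End Correct.

Local Open Scope classical_set_scope.

Lemma meas_fib d (T : measurableType d) (K : finType) (f : T -> K) (phi : K -> bool) :
  (forall k, measurable [set w | f w = k]) -> measurable [set w | phi (f w)].
Proof.
move=> mf.
have -> : [set w | phi (f w)] = \bigcup_(k in [set k | phi k]) [set w | f w = k].
  apply/seteqP; split => w /=; first by move=> h; exists (f w).
  by case=> k /= hk fk; rewrite fk.
apply: fin_bigcup_measurable; first exact: finite_finset.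
by move=> k _; apply: mf.
Qed.

Section GSec.
Variables (X : nat -> nat) (d : measure_display) (T : measurableType d).
Variables (xi : forall n, {set {set 'I_(X n.+1)}})
  (sig : forall n, T -> {perm 'I_(X n.+1)}) (tau : forall n, T -> {perm 'I_(X n)}).

Definition Ewd (w : T) : Efam X :=
  perm_edge (fun m => ld_edge (xi m) (sig m w)) (fun m => tau m w).

Definition gen : set (set T) :=
  [set A | exists n (a : 'I_(X n)) (b : 'I_(X n.+1)),
           A = [set w | perm_edge (fun m => ld_edge (xi m) (sig m w))
                                  (fun m => tau m w) a b]].

Local Notation T' := (g_sigma_algebraType gen).

Definition Sig := {m : nat & ('I_(X m) * 'I_(X m.+1))%type}.
Definition Ef (e : Sig -> bool) : Efam X := fun m a b => e (existT _ m (a, b)).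
Definition Ew' (w : T) : Sig -> bool := fun t => @Ewd w (projT1 t) (projT2 t).1 (projT2 t).2.

Lemma G_list (S : seq Sig) : forall (Psi : (Sig -> bool) -> bool),
  (forall e1 e2, (forall t, t \in S -> e1 t = e2 t) -> Psi e1 = Psi e2) ->
  measurable ([set w | Psi (Ew' w)] : set T').
Proof.
elim: S => [|t S IH] Psi dep.
  case h : (Psi (fun _ => false)).
    have -> : [set w | Psi (Ew' w)] = setT.
      apply/seteqP; split => // w _ /=; rewrite (dep _ (fun _ => false)) ?h // => t; by rewrite in_nil.
    exact: measurableT.
  have -> : [set w | Psi (Ew' w)] = set0.
    apply/seteqP; split => // w /=; rewrite (dep _ (fun _ => false)) ?h // => t; by rewrite in_nil.

  exact: measurable0.
pose Psib b e := Psi (fun t' => if t' == t then b else e t').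
have mt : measurable ([set w | Ew' w t] : set T').
  by apply: sub_gen_smallest; exists (projT1 t), (projT2 t).1, (projT2 t).2.
have -> : [set w | Psi (Ew' w)] =
   ([set w | Ew' w t] `&` [set w | Psib true (Ew' w)]) `|`
   (~` [set w | Ew' w t] `&` [set w | Psib false (Ew' w)]).
  apply/seteqP; split => w /=.
    move=> H; case h : (Ew' w t); [left|right]; (split; [by []|]);
      rewrite /Psib (dep _ (Ew' w)) // => t' _; case: eqP => // ->; by rewrite h.
  case => -[h1 h2]; move: h2; rewrite /Psib (dep _ (Ew' w)) // => t' _;
    case: eqP => // ->.
    by rewrite h1.
  by apply/esym/negP.
apply: measurableU; apply: measurableI => //.
- by apply: IH => e1 e2 h; rewrite /Psib; apply: dep => t'; case: eqP => // _ /[1!inE] /orP[/eqP//|]; apply: h.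
- exact: measurableC.
- by apply: IH => e1 e2 h; rewrite /Psib; apply: dep => t'; case: eqP => // _ /[1!inE] /orP[/eqP//|]; apply: h.
Qed.

Definition Slist M : seq Sig :=
  flatten [seq [seq (existT _ m (a, b) : Sig) | a <- enum 'I_(X m), b <- enum 'I_(X m.+1)]
          | m <- iota 0 M].

Lemma mem_Slist M m (a : 'I_(X m)) (b : 'I_(X m.+1)) : m < M ->
  (existT _ m (a, b) : Sig) \in Slist M.
Proof.
move=> lt; apply/flattenP.
exists [seq (existT _ m (a, b) : Sig) | a <- enum 'I_(X m), b <- enum 'I_(X m.+1)].
  by apply/mapP; exists m; rewrite // mem_iota.
by apply/allpairsP; exists (a, b); rewrite !mem_enum.
Qed.

Lemma G_dep (Phi : Efam X -> bool) M :
  (forall E1 E2 : Efam X, (forall m, m < M -> forall a b, @E1 m a b = @E2 m a b) ->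
     Phi E1 = Phi E2) ->
  measurable ([set w | Phi (Ewd w)] : set T').
Proof.
move=> dep.
have H := G_list (S := Slist M) (Psi := fun e => Phi (Ef e)).
apply: H => e1 e2 h.
apply: dep => m lt a b; rewrite /Ef; apply: h; exact: mem_Slist.
Qed.

End GSec.

Local Open Scope classical_set_scope.

Section Sets.
Variables (X : nat -> nat) (d : measure_display) (T : measurableType d).
Variables (xi : forall n, {set {set 'I_(X n.+1)}})
  (sig : forall n, T -> {perm 'I_(X n.+1)}) (tau : forall n, T -> {perm 'I_(X n)}).
Hypothesis xiP : forall m, finset.partition (xi m) [set: 'I_(X m.+1)].
Hypothesis cardH : forall m (p : {perm 'I_(X m.+1)}), X m <= #|Xi (xi m) p|.+1.
Variables (n : nat) (i : 'I_(X n)).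
Local Notation T' := (g_sigma_algebraType (gen xi sig tau)).
Local Notation Ew := (Ewd xi sig tau).

Definition Bset (v : 'I_(X n)) : set T :=
  \bigcup_dd [set w | fixd (Ew w) dd n && (rkd (Ew w) dd v == val i)].
Definition Mset : set T := \bigcup_dd [set w | fixd (Ew w) dd n].

Lemma Bset_G v : measurable (Bset v : set T').
Proof.
apply: bigcupT_measurable => dd.
apply: (@G_dep _ _ _ xi sig tau (fun E => fixd E dd n && (rkd E dd v == val i)) (dd + n)).
move=> E1 E2 h; by rewrite (fixd_dep h) // (rkd_dep h).
Qed.

Lemma Mset_G : measurable (Mset : set T').
Proof.
apply: bigcupT_measurable => dd.
apply: (@G_dep _ _ _ xi sig tau (fun E => fixd E dd n) (dd + n)).
move=> E1 E2 h; by rewrite (fixd_dep h).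
Qed.

Lemma Bset_sub v : Bset v `<=` [set w | tau n w i = v].
Proof.
move=> w [dd _ /= /andP[h1 /eqP h2]].
move: h1 h2; rewrite /Ewd fixd_perm rkd_perm => h1.
rewrite (rkd_correct xiP (fun m => @cardH m (sig m w)) _ h1) => /val_inj <-.
by rewrite permKV.
Qed.

Lemma AM_sub v : [set w | tau n w i = v] `&` Mset `<=` Bset v.
Proof.
move=> w [/= e [dd _ /= h1]]; exists dd => //=; rewrite h1 /=.
move: h1; rewrite /Ewd fixd_perm rkd_perm => h1.
by rewrite (rkd_correct xiP (fun m => @cardH m (sig m w)) _ h1) -e permK.
Qed.

Lemma fix_M w : fixation (fun m => ld_edge (xi m) (sig m w)) -> Mset w.
Proof.
case/(_ n) => dd [_ [v hv]]; exists dd => //=.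
rewrite /Ewd fixd_perm; apply/existsP; exists v; apply/forallP => u.
apply/implyP => uv; rewrite -desc_alive; have := hv u uv.
by move=> ->; rewrite eqxx.
Qed.

End Sets.

End Helpers.
Import Helpers.

Local Open Scope classical_set_scope.
Local Open Scope ring_scope.

Theorem proposition2p3
  (X : nat -> nat) (X_pos : forall n, (0 < X n)%N)
  (k : forall n, 'I_(X n) -> nat)
  (k_sum : forall n, (\sum_(i < X n) k n i)%N = X n.+1)
  (xi : forall n, {set {set 'I_(X n.+1)}})
  (xi_part : forall n, finset.partition (xi n) [set: 'I_(X n.+1)]%SET)
  (xi_sizes : forall n, perm_eq [seq #|A| | A : {set 'I_(X n.+1)} <- enum (xi n)]
                          [seq m <- [seq k n i | i <- enum 'I_(X n)] | m != 0%N])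
  (d : measure_display) (T : measurableType d) (R : realType)
  (P : probability T R)
  (sig : forall n, T -> {perm 'I_(X n.+1)})
  (tau : forall n, T -> {perm 'I_(X n)})
  (sig_meas : forall n (p : {perm 'I_(X n.+1)}), measurable [set w | sig n w = p])
  (tau_meas : forall n (q : {perm 'I_(X n)}), measurable [set w | tau n w = q])
  (law : forall (N : nat) (p : forall n, {perm 'I_(X n.+1)})
                (q : forall n, {perm 'I_(X n)}),
      P [set w | forall n, (n < N)%N -> sig n w = p n /\ tau n w = q n] =
      (\prod_(n < N) ((X n.+1)`!%:R^-1 * (X n)`!%:R^-1) : R)%:E)
  (hyp_i : forall n, (#|[set i : 'I_(X n) | k n i == 0%N]%SET| <= 1)%N)
  (hyp_ii : {ae P, forall w,
       fixation (fun m => ld_edge (xi m) (sig m w))}) :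
  let G : set (set T) :=
    <<s [set A | exists n (a : 'I_(X n)) (b : 'I_(X n.+1)),
           A = [set w | perm_edge (fun m => ld_edge (xi m) (sig m w))
                                  (fun m => tau m w) a b]] >> in
  forall (n : nat) (i : 'I_(X n)),
    (exists f : 'I_(X n) -> T -> R,
       forall v, cond_prob_version P G [set w | tau n w i = v] (f v)) /\
    (forall f : 'I_(X n) -> T -> R,
       (forall v, cond_prob_version P G [set w | tau n w i = v] (f v)) ->
       (\int[P]_w (\big[maxe/-oo]_(v < X n) (f v w)%:E) = 1)%E).
Proof.
move=> G n i.
have cardH : forall m (p : {perm 'I_(X m.+1)}), (X m <= #|Xi (xi m) p|.+1)%N.
  by move=> m p; apply: (card_Xs p (xi_sizes m) (hyp_i m)).
pose gen' := gen xi sig tau.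
have mgen : forall A, gen' A -> measurable A.
  move=> A [m [a [b ->]]].
  apply: (@meas_fib _ T _ (fun w => (sig m w, tau m w, tau m.+1 w))
    (fun t => ld_edge (xi m) t.1.1 (t.1.2^-1%g a) (t.2^-1%g b))).
  case=> [[p q] r].
  have -> : [set w | (sig m w, tau m w, tau m.+1 w) = (p, q, r)] =
      [set w | sig m w = p] `&` [set w | tau m w = q] `&` [set w | tau m.+1 w = r].
    apply/seteqP; split => w /=; first by case=> -> -> ->.
    by case=> -[-> ->] ->.
  by apply: measurableI; [apply: measurableI|].
have GM : forall A, G A -> measurable A.
  exact: (smallest_sub (@sigma_algebra_measurable _ T) mgen).
pose A v := [set w | tau n w i = v].
pose B v := @Bset X d T xi sig tau n i v.
pose M := @Mset X d T xi sig tau n.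
have mA v : measurable (A v).
  have -> : A v = [set w | (fun q : {perm 'I_(X n)} => q i == v) (tau n w)].
    by apply/seteqP; split => w /=; [move->; exact: eqxx | move/eqP].
  exact: (@meas_fib _ T _ (tau n) (fun q => q i == v) (tau_meas n)).
have GB v : G (B v) by exact: Bset_G.
have mB v : measurable (B v) := GM _ (GB v).
have GMs : G M by exact: Mset_G.
have mM : measurable M := GM _ GMs.
have PM0 : P (~` M) = 0%E.
  have [N [mN PN0 sub]] := hyp_ii.
  apply/eqP; rewrite -measure_le0 -PN0; apply: le_measure; rewrite ?inE //; first exact: measurableC.
  move=> w Mw; apply: sub => /= fw; apply: Mw; exact: fix_M.
have AB v C : measurable C -> P (A v `&` C) = P (B v `&` C).
  move=> mC; apply/eqP; rewrite eq_le; apply/andP; split; last first.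
    apply: le_measure; rewrite ?inE; [exact: measurableI | exact: measurableI|].
    by move=> w [Bw Cw]; split => //; exact: Bset_sub Bw.
  apply: (@le_trans _ _ (P ((B v `&` C) `|` ~` M))).
    apply: le_measure; rewrite ?inE.
    - exact: measurableI.
    - by apply: measurableU; [exact: measurableI | exact: measurableC].
    move=> w [Aw Cw]; case: (pselect (M w)) => Mw; [left; split => //| by right].
    by apply: (@AM_sub X d T xi sig tau xi_part cardH n i v); split.
  apply: le_trans (measureU2 P (measurableI _ _ (mB v) mC) (measurableC mM)) _.
  rewrite [X in (_ + X <= _)%E](_ : _ = 0%E); first by rewrite adde0.
  exact: PM0.
split.
  exists (fun v => (\1_(B v) : T -> R)) => v; split.
  - move=> U mU; rewrite preimage_indic.
    case: ifP => _; case: ifP => _.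
    + exact: (@measurableT _ (g_sigma_algebraType gen')).
    + exact: GB.
    + exact: (@measurableC _ (g_sigma_algebraType gen') _ (GB v)).
    + exact: (@measurable0 _ (g_sigma_algebraType gen')).
  split.
  - exact: (integrable_indic P (mB v)).
  - move=> C GC; rewrite (integral_indic P (GM _ GC) (mB v)).
    by rewrite AB //; exact: GM.
move=> f hf.
have mid : measurable_fun setT (id : T -> (g_sigma_algebraType gen')).
  move=> _ Y mY; rewrite setTI; exact: GM.
pose P' := pushforward P (id : T -> (g_sigma_algebraType gen')).
have mfv v : measurable_fun setT (EFin \o f v : (g_sigma_algebraType gen') -> \bar R).
  apply/measurable_EFinP => _ U mU; rewrite setTI; exact: (hf v).1 U mU.
have mind v : measurable_fun setT (EFin \o (\1_(B v) : (g_sigma_algebraType gen') -> R)).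
  apply/measurable_EFinP; exact: (@measurable_indic _ (g_sigma_algebraType gen') R setT _ (GB v)).
have hae v : @ae_eq _ (g_sigma_algebraType gen') R P' (fun=> \bar R) setT (EFin \o f v : (g_sigma_algebraType gen') -> \bar R) (EFin \o (\1_(B v) : (g_sigma_algebraType gen') -> R)).
  apply: integral_ae_eq => //.
  - apply: (integrable_pushforward mid (mfv v)) => //.
    exact: (hf v).2.1.
  - move=> E _ mE.
    rewrite (integral_pushforward mid (mfv v)) //; last first.
      exact: (integrableS measurableT (GM _ mE) (@subsetT _ _) (hf v).2.1).
    rewrite (integral_pushforward mid (mind v)) //; last first.
      exact: (integrableS measurableT (GM _ mE) (@subsetT _ _) (integrable_indic P (mB v))).
    transitivity (P (A v `&` E)); first exact: (hf v).2.2 E mE.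
    rewrite AB; last exact: GM _ mE.
    symmetry; exact: (integral_indic P (GM _ mE) (mB v)).
have haeP v : \forall w \ae P, setT w -> (f v w)%:E = ((\1_(B v) : T -> R) w)%:E.
  have [N [mN PN sub]] := hae mid v; exists N; split => //; exact: GM.
have hall : \forall w \ae P, forall v, (f v w)%:E = ((\1_(B v) : T -> R) w)%:E.
  have H : forall s : seq 'I_(X n), \forall w \ae P,
      forall v, v \in s -> (f v w)%:E = ((\1_(B v) : T -> R) w)%:E.
    elim => [|v s IH]; first by apply: aeW.
    move: (haeP v) IH; apply: filterS2 => w h1 h2 v'; rewrite in_cons => /orP[/eqP -> | ].
      by apply: h1.
    exact: h2.
  apply: filterS (H (enum 'I_(X n))) => w h v; apply: h; exact: mem_enum.
have hM : \forall w \ae P, M w.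
  exists (~` M); split => //; exact: measurableC mM.
have mf v : measurable_fun setT (fun w => (f v w)%:E).
  apply/measurable_EFinP => _ U mU; rewrite setTI; apply: GM; exact: (hf v).1 U mU.
have mmax : forall s : seq 'I_(X n),
    measurable_fun setT (fun w => \big[maxe/-oo%E]_(v <- s) (f v w)%:E).
  elim => [|v s IH].
    have -> : (fun w => \big[maxe/-oo%E]_(v <- [::]) (f v w)%:E) = cst -oo%E.
      by apply: funext => w; rewrite big_nil.
    exact: measurable_cst.
  have -> : (fun w => \big[maxe/-oo%E]_(v' <- v :: s) (f v' w)%:E) =
      (fun w => maxe (f v w)%:E (\big[maxe/-oo%E]_(v' <- s) (f v' w)%:E)).
    by apply: funext => w; rewrite big_cons.
  exact: measurable_maxe.
rewrite (ae_eq_integral (cst 1%E)) //.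
- by rewrite integral_cst // mul1e; exact: probability_setT.
move: hall hM; apply: filterS2 => w h Mw _ /=.
under eq_bigr do rewrite h.
apply/eqP; rewrite eq_le; apply/andP; split.
  apply: bigmax_le => [|v _]; first by rewrite leNye.
  by rewrite indicE lee_fin; case: (w \in B v) => //=; rewrite ?ler01 ?lexx.
have Bw : B (tau n w i) w.
  by apply: (@AM_sub X d T xi sig tau xi_part cardH n i (tau n w i)); split.
apply: le_trans (le_bigmax _ _ (tau n w i)).
by rewrite indicE mem_set.
Qed.
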